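(* Let $\mathcal{B}\subseteq\{1,2\}^3$ be a basic set, with associated SNRE sequences $(a_n),(b_n)$ and $S_2$-SFT $X^{\mathcal{B}}$. If $a_1=b_1$, then $h(X^{\mathcal{B}})=\frac12\ln a_1$.
   Context: $S_2$ is the free semigroup on two generators, identified with the set of finite words over $\{1,2\}$ (the binary tree with root the empty word $\epsilon$). The alphabet is $\mathcal{A}=\{1,2\}$. A basic set $\mathcal{B}\subseteq\mathcal{A}^3$ is a set of admissible 2-blocks $(i,i_1,i_2)$; $X^{\mathcal{B}}$ is the associated $S_2$-SFT. For $n\ge0$, $B_n(X^{\mathcal{B}})$ is the set of maps $u$ from words of length $\le n$ to $\mathcal{A}$ with $(u(w),u(w1),u(w2))\in\mathcal{B}$ for all words $w$ of length $\le n-1$; $a_n$ (resp. $b_n$) is the number of such $u$ with $u(\epsilon)=1$ (resp. $2$). Equivalently $a_0=b_0=1$, $a_n=F^{(a)}(a_{n-1},b_{n-1})$, $b_n=F^{(b)}(a_{n-1},b_{n-1})$ where $F^{(a)}(x,y)=\sum_{(1,i,j)\in\mathcal{B}}z_iz_j$, $F^{(b)}(x,y)=\sum_{(2,i,j)\in\mathcal{B}}z_iz_j$ with $z_1=x,z_2=y$; this is the SNRE of $X^{\mathcal{B}}$. The set $E_n$ of elements of length $\le n$ has $|E_n|=2^{n+1}-1$, and the entropy is $h(X^{\mathcal{B}})=\limsup_{n\to\infty}\frac{\ln|B_n(X^{\mathcal{B}})|}{|E_n|}=\limsup_{n\to\infty}\frac{\ln(a_n+b_n)}{2^{n+1}-1}$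 (this limsup is known to be a limit). *)

(* Defs.v *)
From HB Require Import structures.
From mathcomp Require Import all_boot all_order all_algebra.
From mathcomp Require Import all_classical all_reals all_analysis.
Set Implicit Arguments. Unset Strict Implicit. Unset Printing Implicit Defensive.
Import Order.TTheory GRing.Theory Num.Theory.
Local Open Scope ring_scope.

(* Alphabet A = {1,2}, symbols are the naturals 1 and 2.
   A basic set is a boolean predicate on triples (i, i1, i2);
   the hypothesis that it is contained in A^3 is stated separately. *)
Definition basic_set := nat -> nat -> nat -> bool.

Definition in_A3 (B : basic_set) : Prop :=
  forall i i1 i2, B i i1 i2 -> [/\ i \in [:: 1; 2], i1 \in [:: 1; 2] & i2 \in [:: 1; 2]]%N.

Definition zvar (x y : nat) (i : nat) : nat := if i == 1%N then x else y.

Definition SNRE_F (B : basic_set) (c : nat) (x y : nat) : nat :=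
  \sum_(i <- [:: 1; 2]%N) \sum_(j <- [:: 1; 2]%N)
     (B c i j) * (zvar x y i * zvar x y j).

Fixpoint SNRE_ab (B : basic_set) (n : nat) : nat * nat :=
  match n with
  | 0 => (1, 1)%N
  | m.+1 => let: (a, b) := SNRE_ab B m in (SNRE_F B 1 a b, SNRE_F B 2 a b)
  end.

Definition SNRE_a B n := (SNRE_ab B n).1.
Definition SNRE_b B n := (SNRE_ab B n).2.

Definition lnE {R : realType} (k : nat) : \bar R :=
  if k == 0%N then (-oo)%E else (ln (k%:R : R))%:E.

Definition entropy {R : realType} (B : basic_set) : \bar R :=
  limn_esup (fun n => (lnE (SNRE_a B n + SNRE_b B n) *
                       ((2 ^ n.+1 - 1)%N%:R^-1 : R)%:E)%E).

(* Main.v *)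
Require Import Defs.
From HB Require Import structures.
From mathcomp Require Import all_boot all_order all_algebra.
From mathcomp Require Import all_classical all_reals all_analysis.
From mathcomp Require Import zify ring lra.
Import Order.TTheory GRing.Theory Num.Theory.
Import numFieldNormedType.Exports.
Local Open Scope classical_set_scope.

Lemma SNRE_F_diag B k x : SNRE_F B k x x = (SNRE_F B k 1 1 * (x * x))%N.
Proof.
by rewrite /SNRE_F !big_cons !big_nil /zvar /= !muln1 !addn0 !mulnDl.
Qed.

Lemma SNRE_ab_closed B n : SNRE_a B 1 = SNRE_b B 1 ->
  SNRE_ab B n = (SNRE_a B 1 ^ (2 ^ n - 1), SNRE_a B 1 ^ (2 ^ n - 1))%N.
Proof.
move=> Hab.
have Ha : SNRE_a B 1 = SNRE_F B 1 1 1 by [].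

have Hb : SNRE_b B 1 = SNRE_F B 2 1 1 by [].

elim: n => [|n IH].

rewrite expn0.


rewrite subnn.
 
rewrite expn0.
 
 by [].
rewrite [SNRE_ab B n.+1]/SNRE_ab -/(SNRE_ab B n).
 
rewrite IH.
 
rewrite (SNRE_F_diag B 1) (SNRE_F_diag B 2) -Ha -Hb -Hab.
 
have H : (2 ^ n.+1 - 1 = 1 + (2 ^ n - 1) + (2 ^ n - 1))%N.
  rewrite expnS; have := expn_gt0 2 n; move: (2 ^ n)%N => m; lia.

by rewrite H !expnD expn1 -mulnA.
Qed.

Section WS.
Local Open Scope ring_scope.
Lemma w_cvg0 (R : realType) :
  (fun n : nat => ((2 ^ n.+1 - 1)%N%:R^-1 : R)) @ \oo --> 0.
Proof.
apply: (@squeeze_cvgr _ _ _ _ (fun=> 0) harmonic); last first.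
- exact: cvg_harmonic.
- exact: cvg_cst.
apply: nearW => n /=.
have h1 : (n.+1 <= 2 ^ n.+1 - 1)%N.
  have := ltn_expl n.+1 (isT : (1 < 2)%N); move: (2 ^ n.+1)%N => m; lia.
rewrite invr_ge0 ler0n /=.
rewrite ler_pV2 ?inE ?unitfE ?ltr0n ?pnatr_eq0 ?ler_nat //=.
by apply/andP; split; lia.
Qed.
End WS.

Theorem proposition2 (R : realType) (B : basic_set) :
  in_A3 B ->
  SNRE_a B 1 = SNRE_b B 1 ->
  entropy (R := R) B = (((2 : R)^-1)%:E * lnE (SNRE_a B 1))%E.
Proof.
move=> _ Hab; set c := SNRE_a B 1.
have Hn n : (SNRE_a B n + SNRE_b B n = 2 * c ^ (2 ^ n - 1))%N.
  by rewrite /SNRE_a /SNRE_b SNRE_ab_closed //= mul2n addnn.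
have wpos n : (0 < ((2 ^ n.+1 - 1)%N%:R^-1 : R))%R.
  rewrite invr_gt0 ltr0n; have := ltn_expl n.+1 (isT : (1 < 2)%N).
  move: (2 ^ n.+1)%N => m; lia.
rewrite /entropy.
have [c0|cpos] := eqVneq c 0%N.
  have cv : (fun n => (lnE (SNRE_a B n + SNRE_b B n) *
                       ((2 ^ n.+1 - 1)%N%:R^-1 : R)%:E)%E) @ \oo --> -oo%E.
    apply: cvg_near_cst; exists 1%N => // n /= hn.
    rewrite Hn c0 exp0n; last by have := ltn_expl n (isT : (1 < 2)%N); lia.
    by rewrite muln0 /lnE eqxx mulNyr gtr0_sg ?wpos // mul1e.
  rewrite is_cvg_limn_esupE; last by apply/cvg_ex; exists -oo%E.
  rewrite (cvg_lim _ cv) //.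
  by rewrite c0 /lnE eqxx gt0_muleNy // lte_fin invr_gt0.
have cR : (0 < c%:R :> R)%R by rewrite ltr0n lt0n.
set L : R := (ln (c%:R : R) / 2)%R.
set K : R := (ln (2 : R) - L)%R.
have Hu : (fun n => (lnE (SNRE_a B n + SNRE_b B n) *
                       ((2 ^ n.+1 - 1)%N%:R^-1 : R)%:E)%E) =
          (fun n => (L + K * ((2 ^ n.+1 - 1)%N%:R^-1 : R))%:E).
  apply/funext => n; rewrite Hn /lnE.
  have -> : (2 * c ^ (2 ^ n - 1) == 0)%N = false.
    apply/negbTE; rewrite muln_eq0 expn_eq0 (negbTE cpos) /=; done.
  rewrite -EFinM; congr (_%:E).
  have hD : (2 ^ n.+1 - 1 = (2 ^ n - 1) * 2 + 1)%N.
    rewrite expnS; have := expn_gt0 2 n; move: (2 ^ n)%N => m; lia.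
  have hD0 : (((2 ^ n - 1) * 2 + 1)%N%:R != 0 :> R)%R by rewrite pnatr_eq0 addn1.
  rewrite hD; move: hD0; rewrite natrM natrX natrD natrM lnM ?posrE ?exprn_gt0 //.
  rewrite lnXn // -[(ln _ *+ _)%R]mulr_natr /K /L.
  move: ((2 ^ n - 1)%N%:R)%R => k hD0.
  by field.
have Lcv : (fun n : nat => L + K * ((2 ^ n.+1 - 1)%N%:R^-1 : R))%R @ \oo --> L.
  have := cvgD (cvg_cst L) (cvgMl_tmp (a:=K) (w_cvg0 R)).
  rewrite mulr0 addr0 => H; apply: H; exact: _.
have Ecv : (fun n : nat => (L + K * ((2 ^ n.+1 - 1)%N%:R^-1 : R))%R%:E) @ \oo --> L%:E.
  by apply: cvg_EFin; first exact: nearW.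
rewrite Hu is_cvg_limn_esupE; last by apply/cvg_ex; exists L%:E.
rewrite (cvg_lim _ Ecv) //.
by rewrite /lnE (negbTE cpos) -EFinM /L mulrC.
Qed.
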